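(* Consider a prepare-and-measure QKD protocol in which Alice prepares states $\{\rho_i^\mu\}\subset\mathcal{S}(A'')$ with probabilities $p(i,\mu)$, recording $(i,\mu)$ in a classical register $A$, and a virtual protocol identical to it except that the prepared states are $\{\xi_i^\mu\}\subset\mathcal{S}(A')$. Suppose there exists a quantum channel $\Psi$ from $A'$ to $A''$ (a source map) with $\rho_i^\mu=\Psi[\xi_i^\mu]$ for all $i,\mu$. Then $\varepsilon_{\mathrm{sec}}$-secrecy of the virtual protocol implies $\varepsilon_{\mathrm{sec}}$-secrecy of the real protocol.
   Context: $\mathcal{S}(H)$ denotes the density operators on $H$. A prepare-and-measure protocol with per-round prepared state $\rho^{\mathrm{prep}}_{AX}=\sum_{i,\mu}p(i,\mu)|i,\mu\rangle\langle i,\mu|_A\otimes\rho_i^\mu$ (Alice keeps $A$, sends $X$) and protocol map $\mathcal{E}^{(l)}$, ideal map $\mathcal{E}^{(l),\mathrm{ideal}}$ acting on $A^nB^n$ (the same maps for the real and virtual protocols), is $\varepsilon_{\mathrm{sec}}$-secret if $\tfrac12\|((\mathcal{E}^{(l)}-\mathcal{E}^{(l),\mathrm{ideal}})\otimes\mathrm{id}_{E^n})[(\mathrm{id}_{A^n}\otimes\Phi)(\rho^{\mathrm{prep}\,\otimes n}_{AX})]\|_1\leq\varepsilon_{\mathrm{sec}}$ for all channels $\Phi$ from $X^n$ to $B^nE^n$; $X=A''$ for the real and $X=A'$ for the virtual protocol. The ideal map replaces the key on acceptance by a uniformly random key of the same length independent of other outputs. *)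

(* Defs.v *)
From Stdlib Require Import ClassicalEpsilon.
From mathcomp Require Import all_boot all_order all_algebra all_field.
Set Implicit Arguments. Unset Strict Implicit. Unset Printing Implicit Defensive.
Import Order.TTheory GRing.Theory Num.Theory.
Local Open Scope ring_scope.

(* A finite-dimensional quantum system is given by a finite type indexing an
   orthonormal basis; operators on it are complex matrices indexed by it. *)
Definition op (T : finType) := T -> T -> algC.
Definition qmap (T U : finType) := op T -> op U.

Definition op_add T (X Y : op T) : op T := fun i j => X i j + Y i j.
Definition op_sub T (X Y : op T) : op T := fun i j => X i j - Y i j.
Definition op_scale T (a : algC) (X : op T) : op T := fun i j => a * X i j.
Definition op_mul T (X Y : op T) : op T := fun i j => \sum_k X i k * Y k j.
Definition op_adj T (X : op T) : op T := fun i j => (X j i)^*.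
Definition op_tr T (X : op T) : algC := \sum_i X i i.

Definition psd T (X : op T) : Prop :=
  (forall i j, X i j = (X j i)^*) /\
  (forall v : T -> algC, 0 <= \sum_i \sum_j (v i)^* * X i j * v j).

Definition density T (X : op T) : Prop := psd X /\ op_tr X = 1.

Definition trnorm T (X : op T) : algC :=
  epsilon (inhabits 0) (fun t => exists S : op T,
     psd S /\ op_mul S S = op_mul (op_adj X) X /\ t = op_tr S).

Definition id_tensor (R T U : finType) (Phi : qmap T U) : qmap (R * T)%type (R * U)%type :=
  fun M ru ru' => Phi (fun t t' => M (ru.1, t) (ru'.1, t')) ru.2 ru'.2.
Definition tensor_id (R T U : finType) (Phi : qmap T U) : qmap (T * R)%type (U * R)%type :=
  fun M ur ur' => Phi (fun t t' => M (t, ur.2) (t', ur'.2)) ur.1 ur'.1.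

Definition linear_qmap T U (Phi : qmap T U) : Prop :=
  forall (a : algC) (X Y : op T),
    Phi (op_add (op_scale a X) Y) = op_add (op_scale a (Phi X)) (Phi Y).
Definition trace_preserving T U (Phi : qmap T U) : Prop :=
  forall X, op_tr (Phi X) = op_tr X.
Definition completely_positive T U (Phi : qmap T U) : Prop :=
  forall (R : finType) (M : op (R * T)%type), psd M -> psd (@id_tensor R T U Phi M).
Definition channel T U (Phi : qmap T U) : Prop :=
  [/\ linear_qmap Phi, completely_positive Phi & trace_preserving Phi].

(* prepared state rho^prep_{AX} = sum_l p(l) |l><l|_A (x) rho_l, with the
   classical register A having basis L (labels l = (i, mu)). *)
Definition prep_state (L X : finType) (p : L -> algC) (rho : L -> op X)
  : op (L * X)%type :=
  fun ax ax' => if ax.1 == ax'.1 then p ax.1 * rho ax.1 ax.2 ax'.2 else 0.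

(* rho^{prep (x) n}, with subsystems regrouped as A^n X^n *)
Definition tensor_pow_prep (L X : finType) (n : nat) (rho : op (L * X)%type)
  : op (n.-tuple L * n.-tuple X)%type :=
  fun ax ax' => \prod_(k < n)
     rho (tnth ax.1 k, tnth ax.2 k) (tnth ax'.1 k, tnth ax'.2 k).

Definition reassoc (P Q S : finType) (M : op (P * (Q * S))%type) : op ((P * Q) * S)%type :=
  fun x y => M (x.1.1, (x.1.2, x.2)) (y.1.1, (y.1.2, y.2)).

Definition sec_quantity (L X B K Ev : finType) (n : nat)
  (p : L -> algC) (rho : L -> op X)
  (Eprot Eideal : qmap (n.-tuple L * n.-tuple B)%type K)
  (Phi : qmap (n.-tuple X) (n.-tuple B * n.-tuple Ev)%type) : algC :=
  let st := reassoc (@id_tensor (n.-tuple L) _ _ Phi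
                      (@tensor_pow_prep L X n (prep_state p rho))) in
  trnorm (op_sub (@tensor_id (n.-tuple Ev) _ _ Eprot st)
                 (@tensor_id (n.-tuple Ev) _ _ Eideal st)) / 2.

Definition eps_secret (L X B K : finType) (n : nat)
  (p : L -> algC) (rho : L -> op X)
  (Eprot Eideal : qmap (n.-tuple L * n.-tuple B)%type K) (eps : algC) : Prop :=
  forall (Ev : finType) (Phi : qmap (n.-tuple X) (n.-tuple B * n.-tuple Ev)%type),
    channel Phi -> @sec_quantity L X B K Ev n p rho Eprot Eideal Phi <= eps.

(* Main.v *)
Require Import Defs.
From mathcomp Require Import all_boot all_order all_algebra all_field.
From Stdlib Require Import FunctionalExtensionality.
Import Order.TTheory GRing.Theory Num.Theory.
Local Open Scope ring_scope.
Set Implicit Arguments. Unset Strict Implicit.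

Definition comp_q (T U V : finType) (F : qmap U V) (G : qmap T U) : qmap T V :=
  fun M => F (G M).
Definition reidx (T U : finType) (f : U -> T) : qmap T U :=
  fun M u u' => M (f u) (f u').

Ltac fext2 := let i := fresh "i" in let j := fresh "j" in
  apply functional_extensionality; intro i;
  apply functional_extensionality; intro j.

Lemma lin_zero (T U : finType) (F : qmap T U) :
  linear_qmap F -> F (fun _ _ => 0) = (fun _ _ => 0).
Proof.
move=> hF; have := hF 1 (fun _ _ => 0) (fun _ _ => 0).
have -> : op_add (op_scale 1 (fun _ _ : T => 0 : algC)) (fun _ _ => 0)
   = (fun _ _ => 0) by fext2; rewrite /op_add /op_scale mulr0 addr0.
move=> e; fext2.
have := congr1 (fun Z => Z i j) e; rewrite /op_add /op_scale /= mul1r => h.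
by apply: (addrI (F (fun _ _ => 0) i j)); rewrite addr0 -h.
Qed.

Lemma lin_scale (T U : finType) (F : qmap T U) :
  linear_qmap F -> forall a X, F (op_scale a X) = op_scale a (F X).
Proof.
move=> hF a X; have := hF a X (fun _ _ => 0); rewrite (lin_zero hF) => e.
fext2; have := congr1 (fun Z => Z i j) e; rewrite /op_add /= addr0 => <-.
congr (F _ i j); fext2; by rewrite /op_add addr0.
Qed.

Lemma psd_reidx (T U : finType) (f : U -> T) (M : op T) :
  psd M -> psd (reidx f M).
Proof.
case=> hH hP; split=> [i j|v]; first exact: hH.
pose w t := \sum_(u | f u == t) v u.
have := hP w.
suff -> : \sum_i \sum_j (v i)^* * reidx f M i j * v j
        = \sum_i \sum_j (w i)^* * M i j * w j by [].
rewrite /reidx.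
transitivity (\sum_u \sum_t' (v u)^* * M (f u) t' * w t').
  apply: eq_bigr => u _.
  rewrite (partition_big f predT) //=.
  apply: eq_bigr => t' _; rewrite /w mulr_sumr.
  by apply: eq_bigr => u' /eqP ->.
rewrite (partition_big f predT) //=.
apply: eq_bigr => t _.
rewrite exchange_big /=; apply: eq_bigr => t' _.
rewrite /w rmorph_sum /= !mulr_suml.
by apply: eq_bigr => u /eqP ->.
Qed.

Lemma ch_comp (T U V : finType) (F : qmap U V) (G : qmap T U) :
  channel F -> channel G -> channel (comp_q F G).
Proof.
case=> lF cF tF [lG cG tG]; split.
- by move=> a X Y; rewrite /comp_q lG lF.
- by move=> R M hM; exact: (cF R _ (cG R M hM)).
- by move=> X; rewrite /comp_q tF tG.
Qed.

Lemma ch_reidx (T U : finType) (f : U -> T) : bijective f -> channel (reidx f).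
Proof.
move=> bf; split.
- by [].
- move=> R M hM.
  have H := psd_reidx (fun ru : R * U => (ru.1, f ru.2)) hM.
  exact H.
- move=> X; rewrite /op_tr /reidx.
  by rewrite [RHS](reindex f) //; apply: onW_bij.
Qed.

Lemma ch_idt (S T U : finType) (F : qmap T U) :
  channel F -> channel (@id_tensor S T U F).
Proof.
case=> lF cF tF; split.
- move=> a X Y; apply functional_extensionality => ru;
  apply functional_extensionality => ru'.
  have := lF a (fun t t' => X (ru.1,t) (ru'.1,t')) (fun t t' => Y (ru.1,t) (ru'.1,t')).
  move/(congr1 (fun Z => Z ru.2 ru'.2)) => /= e; exact: e.
- move=> R M hM.
  have H := psd_reidx (fun x : R * (S * U) => ((x.1, x.2.1), x.2.2))
     (cF (R * S)%type _ (psd_reidx (fun y : (R * S) * T => (y.1.1, (y.1.2, y.2))) hM)).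
  exact H.
- move=> X; rewrite /op_tr /id_tensor.
  transitivity (\sum_(s : S) \sum_(u : U)
      F (fun t t' => X (s, t) (s, t')) u u).
    by rewrite pair_big.
  transitivity (\sum_(s : S) \sum_(t : T) X (s, t) (s, t)).
    by apply: eq_bigr => s _; exact: tF.
  by rewrite pair_big; apply: eq_bigr => -[].
Qed.

Lemma ch_tid (S T U : finType) (F : qmap T U) :
  channel F -> channel (@tensor_id S T U F).
Proof.
move=> cF.
have -> : @tensor_id S T U F =
  comp_q (reidx (fun p : U * S => (p.2, p.1)))
         (comp_q (@id_tensor S T U F) (reidx (fun p : S * T => (p.2, p.1)))) by [].
apply: ch_comp; first by apply: ch_reidx; exists (fun p => (p.2, p.1)) => [[]|[]].
apply: ch_comp; first exact: ch_idt.
by apply: ch_reidx; exists (fun p => (p.2, p.1)) => [[]|[]].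
Qed.

Definition tsplit (X : finType) m (t : m.+1.-tuple X) : X * m.-tuple X :=
  (thead t, [tuple of behead t]).
Definition tcons (X : finType) m (p : X * m.-tuple X) : m.+1.-tuple X :=
  [tuple of p.1 :: p.2].

Lemma tsplit_cons (X : finType) m x (t : m.-tuple X) :
  tsplit [tuple of x :: t] = (x, t).
Proof. by rewrite /tsplit theadE; congr pair; apply: val_inj. Qed.

Lemma tcons_bij (X : finType) m : bijective (@tcons X m).
Proof.
exists (@tsplit X m) => [[x t]|t]; first exact: tsplit_cons.
by rewrite /tcons /tsplit /= -tuple_eta.
Qed.

Lemma tsplit_bij (X : finType) m : bijective (@tsplit X m).
Proof.
exists (@tcons X m) => [t|[x t]]; last exact: tsplit_cons.
by rewrite /tcons /tsplit /= -tuple_eta.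
Qed.

Fixpoint PsiN (X1 X2 : finType) (Psi : qmap X1 X2) (n : nat)
  : qmap (n.-tuple X1) (n.-tuple X2) :=
  match n with
  | 0 => reidx (fun _ : 0.-tuple X2 => ([tuple] : 0.-tuple X1))
  | m.+1 => comp_q (reidx (@tsplit X2 m))
             (comp_q (@tensor_id _ _ _ Psi)
               (comp_q (@id_tensor X1 _ _ (@PsiN X1 X2 Psi m)) (reidx (@tcons X1 m))))
  end.
Arguments PsiN {X1 X2} Psi n.

Lemma PsiN_ch (X1 X2 : finType) (Psi : qmap X1 X2) n :
  channel Psi -> channel (PsiN Psi n).
Proof.
move=> cP; elim: n => [|m IH] /=.
  by apply: ch_reidx; exists (fun _ => [tuple]) => t; rewrite [t]tuple0 ?[RHS]tuple0.
apply: ch_comp; first exact/ch_reidx/tsplit_bij.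
apply: ch_comp; first exact: ch_tid.
apply: ch_comp; first exact: ch_idt.
exact/ch_reidx/tcons_bij.
Qed.

Definition prodop (L X : finType) n (s : L -> op X) (a : n.-tuple L) : op (n.-tuple X) :=
  fun x x' => \prod_(k < n) s (tnth a k) (tnth x k) (tnth x' k).

Lemma PsiN_prod (L X1 X2 : finType) (Psi : qmap X1 X2) (xi : L -> op X1) n :
  channel Psi -> forall a : n.-tuple L,
  PsiN Psi n (prodop xi a) = prodop (fun l => Psi (xi l)) a.
Proof.
move=> cP; have lP : linear_qmap Psi by case: cP.
elim: n => [|m IH] a.
  by fext2; rewrite /= /reidx /prodop !big_ord0.
have lN : linear_qmap (PsiN Psi m) by case: (PsiN_ch m cP).
case/tupleP: a => a0 a.
have e1 : reidx (@tcons X1 m) (prodop xi [tuple of a0 :: a]) =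
   fun p p' => xi a0 p.1 p'.1 * prodop xi a p.2 p'.2.
  fext2; rewrite /reidx /prodop big_ord_recl /tcons !tnth0.
  by congr (_ * _); apply: eq_bigr => k _; rewrite !tnthS.
have e2 : id_tensor (PsiN Psi m) (fun p p' => xi a0 p.1 p'.1 * prodop xi a p.2 p'.2)
   = fun p p' => xi a0 p.1 p'.1 * prodop (fun l => Psi (xi l)) a p.2 p'.2.
  fext2; rewrite /id_tensor.
  transitivity (PsiN Psi m (op_scale (xi a0 i.1 j.1) (prodop xi a)) i.2 j.2); first by [].
  by rewrite (lin_scale lN) IH.
fext2; case/tupleP: i => y0 y; case/tupleP: j => y0' y'.
rewrite /= /comp_q e1 e2 /reidx !tsplit_cons /tensor_id /=.
have e3 : (fun t t' => xi a0 t t' * prodop (fun l => Psi (xi l)) a y y') =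
   op_scale (prodop (fun l => Psi (xi l)) a y y') (xi a0).
  by fext2; rewrite /op_scale mulrC.
rewrite e3 (lin_scale lP) /op_scale /prodop big_ord_recl !tnth0 mulrC.
by congr (_ * _); apply: eq_bigr => k _; rewrite !tnthS.
Qed.

Lemma key_eq (L X1 X2 : finType) (Psi : qmap X1 X2) (xi : L -> op X1) (p : L -> algC) n :
  channel Psi ->
  @id_tensor (n.-tuple L) _ _ (PsiN Psi n) (@tensor_pow_prep L X1 n (prep_state p xi))
  = @tensor_pow_prep L X2 n (prep_state p (fun l => Psi (xi l))).
Proof.
move=> cP; have lN : linear_qmap (PsiN Psi n) by case: (PsiN_ch n cP).
apply functional_extensionality => -[a y]; apply functional_extensionality => -[a' y'].
rewrite /id_tensor /=.
have [<-|neq] := eqVneq a a'.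
  have e : (fun t t' => @tensor_pow_prep L X1 n (prep_state p xi) (a, t) (a, t')) =
      op_scale (\prod_(k < n) p (tnth a k)) (prodop xi a).
    fext2; rewrite /tensor_pow_prep /prep_state /op_scale /prodop /=.
    rewrite -big_split /=; apply: eq_bigr => k _; by rewrite eqxx.
  rewrite e (lin_scale lN) PsiN_prod // /op_scale /prodop /tensor_pow_prep /prep_state /=.
  rewrite -big_split /=; apply: eq_bigr => k _; by rewrite eqxx.
have [k hk] : exists k, tnth a k != tnth a' k.
  apply/existsP; apply: contraR neq; rewrite negb_exists => /forallP h.
  by apply/eqP/eq_from_tnth => k; apply/eqP; move: (h k); rewrite negbK.
have e : (fun t t' => @tensor_pow_prep L X1 n (prep_state p xi) (a, t) (a', t')) =
    (fun _ _ => 0).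
  fext2; rewrite /tensor_pow_prep /prep_state /= (bigD1 k) //= (negbTE hk).
  by rewrite mul0r.
rewrite e (lin_zero lN) /tensor_pow_prep /prep_state /= (bigD1 k) //= (negbTE hk).
by rewrite mul0r.
Qed.

Unset Implicit Arguments.

Theorem lemma8 (L X' X'' B K : finType) (n : nat) (p : L -> algC)
  (xi : L -> op X') (rho : L -> op X'')
  (Eprot Eideal : qmap (n.-tuple L * n.-tuple B)%type K) (eps : algC) :
  (forall l, 0 <= p l) -> \sum_l p l = 1 ->
  (forall l, density (xi l)) -> (forall l, density (rho l)) ->
  channel Eprot -> channel Eideal ->
  (exists Psi : qmap X' X'', channel Psi /\ forall l, rho l = Psi (xi l)) ->
  @eps_secret L X' B K n p xi Eprot Eideal eps ->
  @eps_secret L X'' B K n p rho Eprot Eideal eps.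
Proof.
move=> _ _ _ _ _ _ [Psi [cP hrho]] hsec Ev Phi cPhi.
have er : rho = (fun l => Psi (xi l)) by apply: functional_extensionality.
subst rho.
have := hsec Ev (comp_q Phi (PsiN Psi n)) (ch_comp cPhi (PsiN_ch n cP)).
have e : @id_tensor (n.-tuple L) _ _ Phi
           (@tensor_pow_prep L X'' n (prep_state p (fun l => Psi (xi l))))
       = @id_tensor (n.-tuple L) _ _ (comp_q Phi (PsiN Psi n))
           (@tensor_pow_prep L X' n (prep_state p xi)).
  by rewrite -key_eq.
by rewrite /sec_quantity e.
Qed.
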